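(* For every even integer $k\geq 2$ there is an undirected graph $G$ with degeneracy at most $k$, $n(G)=\frac{(k+2)k}{2}+1$ and $f(G)=\frac{k^2}{2}$.
   Context: All graphs are finite and simple. $n(G)$ is the number of vertices and $f(G)$ is the minimum size of a feedback vertex set of $G$ (a set $F\subseteq V(G)$ with $G-F$ acyclic). An ordering $\phi$ of $V(G)$ is a $k$-elimination ordering if each vertex has at most $k$ neighbours preceding it in $\phi$; the degeneracy of $G$ is the least $k$ such that $G$ has a $k$-elimination ordering. *)

(* Defs.v *)
From mathcomp Require Import all_boot.
Set Implicit Arguments. Unset Strict Implicit. Unset Printing Implicit Defensive.

Definition simple_graph (T : finType) (e : rel T) : Prop :=
  symmetric e /\ irreflexive e.

(* An ordering phi of V(G) is given as a duplicate-free sequence s listing all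
   vertices; y precedes x iff index y s < index x s. *)
Definition elim_ordering (T : finType) (e : rel T) (k : nat) (s : seq T) : Prop :=
  [/\ uniq s, (forall x : T, x \in s) &
      forall x : T, #|[set y | e x y & index y s < index x s]| <= k].

Definition degeneracy_le (T : finType) (e : rel T) (k : nat) : Prop :=
  exists s : seq T, elim_ordering e k s.

Definition is_graph_cycle (T : finType) (e : rel T) (c : seq T) : Prop :=
  [/\ 2 < size c, uniq c & cycle e c].

Definition is_fvs (T : finType) (e : rel T) (F : {set T}) : Prop :=
  forall c : seq T, is_graph_cycle e c -> all (fun v => v \notin F) c -> False.

Definition fvs_number_is (T : finType) (e : rel T) (m : nat) : Prop :=
  (exists F : {set T}, is_fvs e F /\ #|F| = m) /\
  (forall F : {set T}, is_fvs e F -> m <= #|F|).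

(* Main.v *)
Require Import Defs.
From mathcomp Require Import all_boot zify.
Set Implicit Arguments. Unset Strict Implicit. Unset Printing Implicit Defensive.


Definition NN m := (m*2).+2.
Definition vv m := m * NN m.
Definition blk m x := x %/ NN m.
Definition pos m x := x %% NN m.
Definition Bk m y x : bool := (x < y) &&
  (if y == vv m then (pos m x == 0) || (pos m x == (m*2).+1)
   else if blk m x == blk m y then ~~ ((pos m x == 0) && (pos m y == (m*2).+1))
   else (pos m y == 0) && ((pos m x == 0) || (pos m x == (m*2).+1))).
Definition E m x y := Bk m y x || Bk m x y.

Lemma NN_gt0 m : 0 < NN m. Proof. by []. Qed.

Lemma dm_inj m x y : blk m x = blk m y -> pos m x = pos m y -> x = y.
Proof. by rewrite /blk /pos => Hb Hp; rewrite (divn_eq x (NN m)) (divn_eq y (NN m)) Hb Hp. Qed.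

Lemma pos_lt m x y : blk m x = blk m y -> x < y -> pos m x < pos m y.
Proof.
rewrite /blk /pos => Hb Hxy.
by move: Hxy; rewrite {1}(divn_eq x (NN m)) {1}(divn_eq y (NN m)) Hb ltn_add2l.
Qed.

Lemma blk_le m x y : x <= y -> blk m x <= blk m y.
Proof. exact: leq_div2r. Qed.

Lemma blk_lt_lt m x y : blk m x < blk m y -> x < y.
Proof. by move=> H; rewrite ltnNge; apply/negP => /(blk_le m); rewrite leqNgt H. Qed.

Lemma blk_lt_v m x : x < vv m -> blk m x < m.
Proof. by rewrite /blk ltn_divLR. Qed.

Lemma blk_v m : blk m (vv m) = m.
Proof. by rewrite /blk /vv mulnK. Qed.

Lemma pos_v m : pos m (vv m) = 0.
Proof. by rewrite /pos /vv modnMl. Qed.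

Lemma pos_ltN m x : pos m x < (m*2).+2.
Proof. exact: ltn_pmod. Qed.

Lemma blk_pos_eq m b p : p < NN m -> blk m (b * NN m + p) = b /\ pos m (b * NN m + p) = p.
Proof.
move=> Hp; rewrite /blk /pos divnMDl // divn_small // addn0; split => //.
by rewrite modnMDl modn_small.
Qed.

Lemma Bk_cases m x y : x <= vv m -> Bk m x y ->
 [\/ x = vv m /\ y < vv m /\ (pos m y = 0 \/ pos m y = (m*2).+1),
     [/\ x < vv m, pos m x = 0, blk m y < blk m x & (pos m y = 0 \/ pos m y = (m*2).+1)]
   | [/\ x < vv m, pos m x <> 0, blk m y = blk m x, pos m y < pos m x & (pos m x = (m*2).+1 -> pos m y <> 0)]].
Proof.
move=> Hx /andP[Hyx]; case: (x =P vv m) => [Ex H|Hv]; first subst x.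
  apply: Or31; split => //; split => //; by case/orP: H => /eqP; auto.
have Hxv : x < vv m by rewrite ltn_neqAle Hx andbT; apply/eqP.
case: eqP => [Hb H|Hb /andP[/eqP H1 H2]].
  have Hp := pos_lt Hb Hyx.
  apply: Or33; split => //.
  - by move=> H0; rewrite H0 in Hp.
  - by move=> HK H0; move: H; rewrite H0 HK !eqxx.
apply: Or32; split => //.
- by rewrite ltn_neqAle; apply/andP; split; [apply/eqP | apply: blk_le; apply: ltnW].
- by case/orP: H2 => /eqP; auto.
Qed.

Definition code m x y := if (x == vv m) || (pos m x == 0) then 2 * blk m y + (pos m y != 0)
  else if pos m x == (m*2).+1 then (pos m y).-1 else pos m y.

Lemma back_code m x y : x <= vv m -> Bk m x y -> code m x y < m*2.
Proof.
move=> Hx H; have := pos_ltN m x; rewrite /code.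
case: (Bk_cases Hx H) => [[-> [Hy Hp]]|[Hxv Hp Hb Hpy]|[Hxv Hp Hb Hpy HK]] Hlt.
- rewrite eqxx /=; have := blk_lt_v Hy; case: Hp => ->; lia.
- rewrite Hp eqxx orbT; have := blk_lt_v Hxv; case: Hpy => ->; lia.
- have -> : (x == vv m) = false by apply/eqP => E; rewrite E ltnn in Hxv.
  move/eqP/negbTE: Hp => -> /=; case: eqP => HK'.
  + have := HK HK'; lia.
  + lia.
Qed.

Lemma back_inj m x y y' : x <= vv m -> Bk m x y -> Bk m x y' -> code m x y = code m x y' -> y = y'.
Proof.
move=> Hx H H'; rewrite /code.
case: (Bk_cases Hx H) => [[Hxe [Hy Hp]]|[Hxv Hp Hb Hpy]|[Hxv Hp Hb Hpy HK]].
- case: (Bk_cases Hx H') => [[_ [Hy' Hp']]|[Hxv' _ _ _]|[Hxv' _ _ _ _]];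
    try by rewrite Hxe ltnn in Hxv'.
  rewrite Hxe eqxx /= => Hc; apply: (@dm_inj m).
  + by move: Hc; case: Hp => ->; case: Hp' => -> /=; lia.
  + by move: Hc; case: Hp => ->; case: Hp' => -> /=; lia.
- case: (Bk_cases Hx H') => [[Hxe _]|[_ _ Hb' Hpy']|[_ Hp0 _ _ _]];
    [by rewrite Hxe ltnn in Hxv | | by []].
  rewrite Hp eqxx orbT => Hc; apply: (@dm_inj m).
  + by move: Hc; case: Hpy => ->; case: Hpy' => -> /=; lia.
  + by move: Hc; case: Hpy => ->; case: Hpy' => -> /=; lia.
- case: (Bk_cases Hx H') => [[Hxe _]|[_ Hp0 _ _]|[_ _ Hb' Hpy' HK']];
    [by rewrite Hxe ltnn in Hxv | by [] | ].
  have -> : (x == vv m) = false by apply/eqP => E; rewrite E ltnn in Hxv.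
  move/eqP/negbTE: (Hp) => -> /= Hc; apply: (@dm_inj m); first by rewrite Hb Hb'.
  move: Hc; case: eqP => HK0 Hc.
  + have := HK HK0; have := HK' HK0; lia.
  + by [].
Qed.

Lemma card_le_code (T : finType) (A : {pred T}) (g : T -> nat) K :
  {in A &, injective g} -> (forall x, x \in A -> g x < K) -> #|A| <= K.
Proof.
move=> Hinj Hlt; rewrite cardE.
have U : uniq (map g (enum A)).
  by rewrite map_inj_in_uniq ?enum_uniq // => x y; rewrite !mem_enum; apply: Hinj.
rewrite -(size_map g) -(size_iota 0 K); apply: uniq_leq_size U _.
move=> z /mapP [x xA ->]; rewrite mem_enum in xA.
by rewrite mem_iota add0n Hlt.
Qed.

Lemma E_sym m a b : E m a b = E m b a.
Proof. by rewrite /E orbC. Qed.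

Lemma E_in m a b : b < vv m -> blk m a = blk m b -> a < b ->
  ~~ ((pos m a == 0) && (pos m b == (m*2).+1)) -> E m a b.
Proof.
move=> Hb Hbl Hab H; rewrite /E /Bk Hab /=.
have -> : (b == vv m) = false by apply/eqP => E; rewrite E ltnn in Hb.
by rewrite Hbl eqxx /= H.
Qed.

Lemma E_v m a : a < vv m -> pos m a = 0 \/ pos m a = (m*2).+1 -> E m (vv m) a.
Proof.
move=> Ha H; rewrite /E /Bk Ha eqxx /=.
by case: H => ->; rewrite eqxx ?orbT.
Qed.

Lemma E_cross m a b : b < vv m -> blk m a < blk m b -> pos m b = 0 ->
  pos m a = 0 \/ pos m a = (m*2).+1 -> E m a b.
Proof.
move=> Hb Hbl Hpb Hpa; rewrite /E /Bk (blk_lt_lt Hbl) /=.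
have -> : (b == vv m) = false by apply/eqP => E; rewrite E ltnn in Hb.
rewrite (ltn_eqF Hbl) Hpb eqxx /=.
by case: Hpa => ->; rewrite eqxx ?orbT.
Qed.

Lemma tri m z1 z2 z3 : z3 < vv m -> blk m z1 = blk m z3 -> blk m z2 = blk m z3 ->
  z1 < z2 -> z2 < z3 ->
  [&& E m z1 z2, E m z2 z3 & E m z3 z1] \/ (pos m z1 = 0 /\ pos m z3 = (m*2).+1).
Proof.
move=> Hv H1 H2 H12 H23.
have P12 := pos_lt (etrans H1 (esym H2)) H12.
have P23 := pos_lt H2 H23.
have P3 := pos_ltN m z3.
have Hz2 : z2 < vv m by apply: ltn_trans Hv.
have e12 : E m z1 z2.
  apply: E_in => //; first by rewrite H1 H2.
  by apply/negP => /andP[_ /eqP]; lia.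
have e23 : E m z2 z3.
  by apply: E_in => //; apply/negP => /andP[/eqP]; lia.
case: (boolP ((pos m z1 == 0) && (pos m z3 == (m*2).+1))) => [/andP[/eqP -> /eqP ->]|Hn].
  by right.
left; rewrite e12 e23 /= E_sym; apply: E_in => //; exact: ltn_trans H23.
Qed.

Definition eg m : rel 'I_(vv m).+1 := fun x y => E m (val x) (val y).
Arguments eg m : clear implicits.

Lemma eg_simple m : simple_graph (eg m).
Proof.
split; first by move=> x y; rewrite /eg E_sym.
by move=> x; rewrite /eg /E /Bk ltnn.
Qed.

Lemma eg_degen m : degeneracy_le (eg m) (m*2).
Proof.
exists (enum 'I_(vv m).+1); rewrite /elim_ordering; split; [exact: enum_uniq | by move=> x; rewrite mem_enum | ].
move=> x; have Hx : val x <= vv m := ltn_ord x.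
have HB : forall y, y \in [set y | eg m x y & index y (enum 'I_(vv m).+1) < index x (enum 'I_(vv m).+1)] -> Bk m (val x) (val y).
  move=> y; rewrite inE !index_enum_ord /eg /E => /andP[/orP[H|H] Hlt] //.
  by move: H => /andP[H _]; rewrite ltnNge ltnW in H.
apply: (@card_le_code _ _ (fun y => code m (val x) (val y))).
- move=> y y' Hy Hy' Hc; apply: val_inj; exact: back_inj Hx (HB _ Hy) (HB _ Hy') Hc.
- by move=> y Hy; apply: back_code Hx (HB _ Hy).
Qed.

Lemma cyc_ok m (c : seq 'I_(vv m).+1) : 2 < size c -> uniq (map val c) -> cycle (eg m) c ->
  is_graph_cycle (eg m) c.
Proof. by move=> Hs Hu Hc; split => //; rewrite (map_inj_uniq val_inj) in Hu. Qed.

Lemma uniq3 (a b c : nat) : a < b -> b < c -> uniq [:: a; b; c].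
Proof. by move=> H1 H2; rewrite /= !inE !negb_or !neq_ltn H1 H2 (ltn_trans H1 H2). Qed.

Lemma uniq4 (a b c d : nat) : a < b -> b < c -> c < d -> uniq [:: a; b; c; d].
Proof.
move=> H1 H2 H3; have H13 := ltn_trans H1 H2; have H24 := ltn_trans H2 H3.
have H14 := ltn_trans H13 H3.
by rewrite /= !inE !negb_or !neq_ltn H1 H2 H3 H13 H24 H14.
Qed.

Lemma uniq4r (a b c d : nat) : a < b -> b < c -> c < d -> uniq [:: d; a; b; c].
Proof.
move=> H1 H2 H3; have H13 := ltn_trans H1 H2; have H24 := ltn_trans H2 H3.
have H14 := ltn_trans H13 H3.
by rewrite /= !inE !negb_or !neq_ltn H1 H2 H3 H13 H24 H14 !orbT.
Qed.

Definition RR m (F : {set 'I_(vv m).+1}) (y : 'I_(vv m).+1) :=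
  [set z | (z \notin F) && (blk m (val z) == blk m (val y)) && (val z < val y)].

Lemma F1 m F y : is_fvs (eg m) F -> y \notin F -> val y < vv m -> 1 < #|RR F y| ->
  exists z1 z2 : 'I_(vv m).+1,
    [/\ z1 \notin F, z2 \notin F, blk m z1 = blk m y, blk m z2 = blk m y &
      [/\ val z1 < val z2, val z2 < val y, pos m z1 = 0 & pos m y = (m*2).+1]].
Proof.
move=> Hf Hy Hyv /card_gt1P [a [b [Ha Hb Hab]]].
move: Ha Hb; rewrite !inE => /andP[/andP[Fa /eqP Ba] La] /andP[/andP[Fb /eqP Bb] Lb].
wlog Hlt : a b Fa Ba La Fb Bb Lb Hab / val a < val b.
  move=> W; case: (ltngtP (val a) (val b)) => H.
  - exact: W H.
  - by apply: (W b a) => //; rewrite eq_sym.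
  - by move: Hab; rewrite (val_inj H) eqxx.
case: (tri Hyv Ba Bb Hlt Lb) => [/and3P[e1 e2 e3]|[P1 P2]].
  exfalso; apply: (Hf [:: a; b; y]).
  - apply: cyc_ok => //; first exact: uniq3 Hlt Lb.
    by rewrite /= /eg e1 e2 e3.
  - by rewrite /= Fa Fb Hy.
by exists a, b.
Qed.

Lemma case_v m F yv y : is_fvs (eg m) F -> val yv = vv m -> yv \notin F ->
  y \notin F -> val y < vv m -> 1 < #|RR F y| -> False.
Proof.
move=> Hf Hv Fv Hy Hyv Hr.
case: (F1 Hf Hy Hyv Hr) => [z1 [z2 [F1' F2' B1 B2 [L12 L2y P1 Py]]]].
have Hz2 : val z2 < vv m by apply: ltn_trans Hyv.
have Hz1 : val z1 < vv m by apply: ltn_trans Hz2.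
apply: (Hf [:: yv; z1; z2; y]).
- apply: cyc_ok => //.
    by rewrite /= Hv; apply: uniq4r.
  rewrite /= /eg Hv.
  have P2 := pos_lt (etrans B1 (esym B2)) L12.
  have P2' := pos_lt B2 L2y. have PN := pos_ltN m y.
  have B12 : blk m z1 = blk m z2 by rewrite B1 B2.
  have e1 : E m (vv m) z1 by apply: E_v => //; left.
  have e2 : E m z1 z2 by apply: E_in => //; apply/negP => /andP[_ /eqP]; lia.
  have e3 : E m z2 y by apply: E_in => //; apply/negP => /andP[/eqP]; lia.
  have e4 : E m y (vv m) by rewrite E_sym; apply: E_v => //; right.
  by rewrite e1 e2 e3 e4.
- by rewrite /= F1' F2' Hy !andbT.
Qed.

Lemma case_two m F y y' : is_fvs (eg m) F -> y \notin F -> y' \notin F ->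
  val y < vv m -> val y' < vv m -> 1 < #|RR F y| -> 1 < #|RR F y'| ->
  blk m y < blk m y' -> False.
Proof.
move=> Hf Hy Hy' Hyv Hyv' Hr Hr' Hb.
case: (F1 Hf Hy Hyv Hr) => [z1 [z2 [F1' F2' B1 B2 [L12 L2y P1 Py]]]].
case: (F1 Hf Hy' Hyv' Hr') => [w1 [w2 [G1 G2 C1 C2 [M12 M2y Q1 Qy]]]].
have Hw1 : val w1 < vv m by apply: ltn_trans Hyv'; apply: ltn_trans M2y.
have Hyw : val y < val w1 by apply: (@blk_lt_lt m); rewrite C1.
apply: (Hf [:: w1; z1; z2; y]).
- apply: cyc_ok => //.
    by apply: uniq4r.
  rewrite /= /eg.
  have P2 := pos_lt (etrans B1 (esym B2)) L12.
  have P2' := pos_lt B2 L2y. have PN := pos_ltN m y.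
  have Hz2 : val z2 < vv m by apply: ltn_trans Hyv.
  have B12 : blk m z1 = blk m z2 by rewrite B1 B2.
  have e1 : E m w1 z1 by rewrite E_sym; apply: E_cross => //; [rewrite B1 C1 | left].
  have e2 : E m z1 z2 by apply: E_in => //; apply/negP => /andP[_ /eqP]; lia.
  have e3 : E m z2 y by apply: E_in => //; apply/negP => /andP[/eqP]; lia.
  have e4 : E m y w1 by apply: E_cross => //; [rewrite C1 | right].
  by rewrite e1 e2 e3 e4.
- by rewrite /= G1 F1' F2' Hy.
Qed.

Lemma case_same m (F : {set 'I_(vv m).+1}) (y y' : 'I_(vv m).+1) : y \notin F ->
  val y < val y' -> blk m y = blk m y' -> #|RR F y| < #|RR F y'|.
Proof.
move=> Hy Hlt Hb; apply: proper_card; apply/properP; split.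
  apply/subsetP => z; rewrite !inE => /andP[/andP[-> /eqP ->] Hz].
  by rewrite Hb eqxx (ltn_trans Hz Hlt).
by exists y; rewrite !inE ?ltnn ?andbF // Hy Hb eqxx Hlt.
Qed.

Lemma Lv m (z : 'I_(vv m).+1) : val z != vv m -> val z < vv m.
Proof. by move=> Hz; rewrite ltn_neqAle Hz -ltnS ltn_ord. Qed.

Lemma lower m F : is_fvs (eg m) F -> #|~: F| <= (m*2).+1.
Proof.
move=> Hf.
pose g (y : 'I_(vv m).+1) := if val y == vv m then m*2
  else if #|RR F y| < 2 then 2 * blk m (val y) + #|RR F y| else m*2.
apply: (@card_le_code _ _ g).
- move=> y y'; rewrite !inE => Hy Hy'; rewrite /g.
  case: eqP => Ey; case: eqP => Ey'.
  + by move=> _; apply: val_inj; rewrite Ey Ey'.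
  + have Hyv' := Lv (introN eqP Ey'); have Hb := blk_lt_v Hyv'.
    case: ltnP => Hr Hc; first by exfalso; lia.
    by exfalso; apply: (case_v Hf Ey Hy Hy' Hyv' Hr).
  + have Hyv := Lv (introN eqP Ey); have Hb := blk_lt_v Hyv.
    case: ltnP => Hr Hc; first by exfalso; lia.
    by exfalso; apply: (case_v Hf Ey' Hy' Hy Hyv Hr).
  + have Hyv := Lv (introN eqP Ey); have Hb := blk_lt_v Hyv.
    have Hyv' := Lv (introN eqP Ey'); have Hb' := blk_lt_v Hyv'.
    case: (ltnP #|RR F y| 2) => Hr; case: (ltnP #|RR F y'| 2) => Hr' Hc.
    * have Hbb : blk m (val y) = blk m (val y')  by move: Hc Hr Hr'; move: #|RR F y| #|RR F y'| (blk m (val y)) (blk m (val y')) => a b c d; lia.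
      have Hrr : #|RR F y| = #|RR F y'| by lia.
      case: (ltngtP (val y) (val y')) => H.
      -- have := case_same Hy H Hbb; lia.
      -- have := case_same Hy' H (esym Hbb); lia.
      -- exact: val_inj.
    * exfalso; lia.
    * exfalso; lia.
    * case: (ltngtP (blk m (val y)) (blk m (val y'))) => H.
      -- by exfalso; apply: (case_two Hf Hy Hy' Hyv Hyv' Hr Hr' H).
      -- by exfalso; apply: (case_two Hf Hy' Hy Hyv' Hyv Hr' Hr H).
      -- apply: val_inj; apply: (@dm_inj m) => //.
         case: (F1 Hf Hy Hyv Hr) => [z1 [z2 [_ _ _ _ [_ _ _ ->]]]].
         by case: (F1 Hf Hy' Hyv' Hr') => [w1 [w2 [_ _ _ _ [_ _ _ ->]]]].
- move=> y _; rewrite /g; case: eqP => Ey; first lia.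
  move: (blk_lt_v (Lv (introN eqP Ey))) => Hb; case: (ltnP #|RR F y| 2) => Hr; last by lia.
  by move: Hr Hb; move: #|RR F y| (blk m (val y)) => a b; lia.
Qed.

Definition S0p m x := (x == vv m) || ((x < vv m) && ((pos m x == 1) || (pos m x == 2))).

Lemma S0_adj m x y : 0 < m -> S0p m x -> S0p m y -> E m x y ->
  [/\ blk m x = blk m y, pos m x != pos m y, (pos m x == 1) || (pos m x == 2)
    & (pos m y == 1) || (pos m y == 2)].
Proof.
move=> Hm.
wlog : x y / Bk m y x.
  move=> W Hx Hy HE; have HE' := HE; move: HE; rewrite /E => /orP[H|H]; first exact: W.
  have HE2 : E m y x by rewrite /E H.
  case: (W y x H Hy Hx HE2) => B P Q R; split => //; by [rewrite B | rewrite eq_sym].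
move=> Hb Hx Hy _; move: Hb; rewrite /Bk => /andP[Hxy].
have Hxv : x < vv m.
  move: Hx; rewrite /S0p => /orP[/eqP Ex|/andP[//]].
  exfalso; rewrite Ex in Hxy; move: Hy; rewrite /S0p => /orP[/eqP Ey|/andP[Hyv _]].
    by rewrite Ey ltnn in Hxy.
  by have := ltn_trans Hxy Hyv; rewrite ltnn.
have Px : (pos m x == 1) || (pos m x == 2).
  by move: Hx; rewrite /S0p => /orP[/eqP Ex|/andP[_ ->]] //; rewrite Ex ltnn in Hxv.
case: eqP => Ey.
  by move=> H; exfalso; move: H Px; case/orP => /eqP -> /orP[] /eqP; lia.
have Py : (pos m y == 1) || (pos m y == 2).
  by move: Hy; rewrite /S0p => /orP[/eqP //|/andP[_ ->]].
case: eqP => Hbl.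
  move=> _; split => //; rewrite neq_ltn; apply/orP; left; exact: pos_lt Hbl Hxy.
by move=> /andP[/eqP H0 _]; move: Py; rewrite H0.
Qed.

Definition S0 m : {set 'I_(vv m).+1} := [set x | S0p m (val x)].

Lemma S0_fvs m : 0 < m -> is_fvs (eg m) (~: S0 m).
Proof.
move=> Hm c [Hs Hu Hc] Hall.
case: c Hs Hu Hc Hall => [|x0 [|x1 [|x2 r]]] //= _.
rewrite !inE !negbK => /andP[Hn0 /andP[Hn1 _]] /andP[He01 /andP[He12 _]] /and4P[I0 I1 I2 _].
case: (S0_adj Hm I0 I1 He01) => B01 N01 P0 P1.
case: (S0_adj Hm I1 I2 He12) => B12 N12 _ P2.
move/negP: Hn0; apply; apply/orP; right; apply/orP; left; apply/eqP.
apply: val_inj; apply: (@dm_inj m); first by rewrite B01 B12.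
move: N01 N12 P0 P1 P2; move: (pos m (val x0)) (pos m (val x1)) (pos m (val x2)) => a b c.
by case: a => [|[|[|a]]] //; case: b => [|[|[|b]]] //; case: c => [|[|[|c]]].
Qed.

Lemma S0_card_ge m : 0 < m -> (m*2).+1 <= #|S0 m|.
Proof.
move=> Hm.
pose f j := j./2 * NN m + (1 + odd j).
have Hf : forall j, j < m*2 -> [/\ f j < vv m, blk m (f j) = j./2 & pos m (f j) = 1 + odd j].
  move=> j Hj.
  have Hp : 1 + odd j < NN m by rewrite /NN; case: (odd j); lia.
  case: (blk_pos_eq (j./2) Hp) => Hb Hpo; split => //.
  rewrite /vv -ltn_divLR //; move: Hb; rewrite /blk => ->.
  by rewrite ltn_half_double -muln2.
pose L := vv m :: [seq f j | j <- iota 0 (m*2)].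
have HL : forall x, x \in L -> x < (vv m).+1 /\ S0p m x.
  move=> x; rewrite inE => /orP[/eqP ->|/mapP [j]]; first by rewrite ltnSn /S0p eqxx.
  rewrite mem_iota add0n => Hj ->; case: (Hf j Hj) => Hlt _ Hpo.
  split; first exact: ltnW.
  by rewrite /S0p Hlt Hpo; case: (odd j); rewrite /= ?eqxx ?orbT.
have HU : uniq L.
  rewrite /L cons_uniq; apply/andP; split.
    apply/mapP => [[j]]; rewrite mem_iota add0n => Hj Hv.
    by case: (Hf j Hj) => Hlt _ _; rewrite -Hv ltnn in Hlt.
  rewrite map_inj_in_uniq ?iota_uniq // => j j'; rewrite !mem_iota !add0n => Hj Hj' Hjj.
  case: (Hf j Hj) => _ B P; case: (Hf j' Hj') => _ B' P'.
  have Eh : j./2 = j'./2 by rewrite -B -B' Hjj.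
  have Eo : odd j = odd j' by move: P; rewrite Hjj P'; case: (odd j); case: (odd j').
  by rewrite -(odd_double_half j) -(odd_double_half j') Eh Eo.
have Hsub : {subset L <= map val (enum (S0 m))}.
  move=> x /HL [Hx HS]; apply/mapP; exists (Ordinal Hx) => //.
  by rewrite mem_enum inE.
by have := uniq_leq_size HU Hsub; rewrite size_map -cardE /= size_map size_iota.
Qed.

Lemma main_m m : 0 < m -> exists e : rel 'I_(vv m).+1,
  [/\ simple_graph e, degeneracy_le e (m*2) & fvs_number_is e (m*m*2)].
Proof.
move=> Hm; exists (eg m); split; [exact: eg_simple | exact: eg_degen | split].
- exists (~: S0 m); split; first exact: S0_fvs.
  have H1 := lower (S0_fvs Hm); rewrite setCK in H1.
  have H2 := S0_card_ge Hm.
  have := cardsC (S0 m); rewrite card_ord.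
  have Hv : vv m = m*m*2 + m*2 by rewrite /vv /NN; nia.
  move: H1 H2; move: #|S0 m| #|~: S0 m| => a b; rewrite Hv; lia.
- move=> F Hf; have H1 := lower Hf.
  have := cardsC F; rewrite card_ord.
  have Hv : vv m = m*m*2 + m*2 by rewrite /vv /NN; nia.
  move: H1; move: #|F| #|~: F| => a b; rewrite Hv; lia.
Qed.

Theorem mainTheorem4 (k : nat) (hk : 2 <= k) (hev : ~~ odd k) :
  exists e : rel 'I_((k + 2) * k %/ 2 + 1),
    [/\ simple_graph e, degeneracy_le e k & fvs_number_is e (k ^ 2 %/ 2)].
Proof.
have [m Em] : exists m, k = m * 2 by exists (k %/ 2); rewrite divnK // dvdn2.
subst k.
have hm : 0 < m by lia.
have -> : (m * 2 + 2) * (m * 2) %/ 2 + 1 = (vv m).+1.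
  by rewrite mulnA mulnK // /vv /NN addn1 mulnC addn2.
have -> : (m * 2) ^ 2 %/ 2 = m * m * 2 by rewrite -mulnn mulnA mulnK // mulnAC.
exact: main_m.
Qed.
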